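(* Let $\mathcal S\subset\mathbb R^n$ be a finite positive spanning set of unit vectors. Then the optimization problem $$\text{(CMP)}\qquad \min_{v\in\mathbb R^n,\ \|v\|=1}\ \max_{d\in\mathcal S} d^\top v$$ is equivalent to the problem $$\text{(QP)}\qquad \max_{x\in\mathbb R^n}\ \|x\|^2\quad\text{subject to}\quad x\in P,\qquad P=\{x\in\mathbb R^n: x^\top d\le 1 \text{ for all } d\in\mathcal S\}.$$
   Context: A finite set $\mathcal S=\{d_1,\dots,d_k\}\subset\mathbb R^n$ is positive spanning if its positive span $\{\lambda_1d_1+\dots+\lambda_kd_k:\lambda_i\ge 0\}$ equals $\mathbb R^n$. $\|\cdot\|$ is the Euclidean norm. The equivalence shown in the paper is via the auxiliary problem (QCLP) $\min_{y\in\mathbb R^n,z\in\mathbb R} z$ subject to $y^\top d\le z$ for all $d\in\mathcal S$ and $\|y\|^2=1$ (which is equivalent to CMP): if $(y^*,z^* )$ is optimal for QCLP then $y^*/z^*$ is optimal for QP, and if $x^*$ is optimal for QP then $(x^*/\|x^*\|,1/\|x^*\|)$ is optimal for QCLP. *)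

(* Defs.v *)
From mathcomp Require Import all_boot all_order all_algebra.
From mathcomp Require Import reals.
Set Implicit Arguments. Unset Strict Implicit. Unset Printing Implicit Defensive.
Import Order.TTheory GRing.Theory Num.Theory.
Local Open Scope ring_scope.

Section Defs.
Variables (R : realType) (n : nat).

Definition dotp (u v : 'rV[R]_n) : R := \sum_(i < n) u 0 i * v 0 i.
Definition enorm (u : 'rV[R]_n) : R := Num.sqrt (dotp u u).

Definition positive_spanning (S : seq 'rV[R]_n) : Prop :=
  forall x : 'rV[R]_n, exists lam : 'rV[R]_n -> R,
    (forall d, d \in S -> 0 <= lam d) /\ x = \sum_(d <- S) lam d *: d.

(* CMP objective: max_{d in S} d^T v  (exact maximum whenever S is nonempty) *)
Definition cmp_obj (S : seq 'rV[R]_n) (v : 'rV[R]_n) : R :=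
  \big[Num.max/dotp (head 0 S) v]_(d <- S) dotp d v.

Definition cmp_opt (S : seq 'rV[R]_n) (v : 'rV[R]_n) : Prop :=
  enorm v = 1 /\ forall w, enorm w = 1 -> cmp_obj S v <= cmp_obj S w.

Definition inP (S : seq 'rV[R]_n) (x : 'rV[R]_n) : Prop :=
  forall d, d \in S -> dotp x d <= 1.

Definition qp_opt (S : seq 'rV[R]_n) (x : 'rV[R]_n) : Prop :=
  inP S x /\ forall y, inP S y -> enorm y ^+ 2 <= enorm x ^+ 2.

End Defs.

(* Main.v *)
Require Import Defs.
From mathcomp Require Import all_boot all_order all_algebra.
From mathcomp Require Import reals.
From mathcomp Require Import lra.
Import Order.TTheory GRing.Theory Num.Theory.
Local Open Scope ring_scope.

Section Aux.
Variables (R : realType) (n : nat).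
Implicit Types (u v w : 'rV[R]_n).

Lemma dotpC u v : dotp u v = dotp v u.
Proof. by rewrite /dotp; apply: eq_bigr => i _; rewrite mulrC. Qed.

Lemma dotpDl u v w : dotp (u + v) w = dotp u w + dotp v w.
Proof. by rewrite /dotp -big_split; apply: eq_bigr => i _; rewrite mxE mulrDl. Qed.

Lemma dotpZl a u w : dotp (a *: u) w = a * dotp u w.
Proof. by rewrite /dotp mulr_sumr; apply: eq_bigr => i _; rewrite mxE mulrA. Qed.

Lemma dotpZr a u w : dotp w (a *: u) = a * dotp w u.
Proof. by rewrite dotpC dotpZl dotpC. Qed.

Lemma dotp0l w : dotp 0 w = 0.
Proof. by rewrite /dotp big1 // => i _; rewrite mxE mul0r. Qed.

Lemma dotp_sum (S : seq 'rV[R]_n) (a : 'rV[R]_n -> R) w :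
  dotp (\sum_(d <- S) a d *: d) w = \sum_(d <- S) a d * dotp d w.
Proof.
elim: S => [|d S IH]; first by rewrite !big_nil dotp0l.
by rewrite !big_cons dotpDl dotpZl IH.
Qed.

Lemma dotp_ge0 u : 0 <= dotp u u.
Proof. by apply: sumr_ge0 => i _; rewrite -expr2 sqr_ge0. Qed.

Lemma dotp_eq0 u : dotp u u = 0 -> u = 0.
Proof.
move=> h; apply/rowP => i; rewrite mxE.
have h' : \sum_(j < n) u 0 j ^+ 2 = 0.
  by rewrite -[RHS]h /dotp; apply: eq_bigr => j _; rewrite expr2.
have := @psumr_eq0P _ _ _ (fun j => u 0 j ^+ 2) (fun j _ => sqr_ge0 (u 0 j)) h' i isT.
by move/eqP; rewrite sqrf_eq0 => /eqP.
Qed.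

Lemma enorm_sqr u : enorm u ^+ 2 = dotp u u.
Proof. by rewrite /enorm sqr_sqrtr // dotp_ge0. Qed.

Lemma enorm_ge0 u : 0 <= enorm u.
Proof. exact: sqrtr_ge0. Qed.

Lemma enormZ a u : enorm (a *: u) = `|a| * enorm u.
Proof.
by rewrite /enorm dotpZl dotpZr mulrA -expr2 sqrtrM ?sqr_ge0 // sqrtr_sqr.
Qed.

Lemma enorm_gt0 u : u != 0 -> 0 < enorm u.
Proof.
move=> hu; rewrite lt_neqAle enorm_ge0 andbT eq_sym.
apply/negP => /eqP h; move/eqP: hu; apply; apply: dotp_eq0.
by rewrite -enorm_sqr h expr2 mul0r.
Qed.

Lemma bigmax_ge (F : 'rV[R]_n -> R) x0 s d :
  d \in s -> F d <= \big[Num.max/x0]_(e <- s) F e.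
Proof.
elim: s => // a s IH; rewrite inE big_cons => /orP [/eqP->|/IH h].
  by rewrite le_max lexx.
by rewrite le_max h orbT.
Qed.

Lemma bigmax_attained (F : 'rV[R]_n -> R) x0 s :
  \big[Num.max/x0]_(e <- s) F e = x0 \/
  exists2 d, d \in s & \big[Num.max/x0]_(e <- s) F e = F d.
Proof.
elim: s => [|a s IH]; first by left; rewrite big_nil.
rewrite big_cons; case: (leP (F a) (\big[Num.max/x0]_(e <- s) F e)) => h.
  case: IH => [->|[d ds ->]]; [by left| right].
  by exists d => //; rewrite inE ds orbT.
by right; exists a => //; rewrite inE eqxx.
Qed.

Variable S : seq 'rV[R]_n.
Hypothesis hS0 : S != [::].

Lemma cmp_ge d v : d \in S -> dotp d v <= cmp_obj S v.
Proof. exact: bigmax_ge. Qed.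

Lemma cmp_att v : exists2 d, d \in S & cmp_obj S v = dotp d v.
Proof.
case: (bigmax_attained (fun d => dotp d v) (dotp (head 0 S) v) S) => [h|//].
exists (head 0 S); last by rewrite /cmp_obj h.
by case: S hS0 => //= a s _; rewrite inE eqxx.
Qed.

Lemma cmpZ a v : 0 <= a -> cmp_obj S (a *: v) = a * cmp_obj S v.
Proof.
move=> ha; apply/eqP; rewrite eq_le; apply/andP; split.
  have [d dS ->] := cmp_att (a *: v).
  by rewrite dotpZr ler_wpM2l // cmp_ge.
have [d dS ->] := cmp_att v.
by rewrite -dotpZr cmp_ge.
Qed.

Lemma inP_cmp x : inP S x <-> cmp_obj S x <= 1.
Proof.
split.
  by move=> h; have [d dS ->] := cmp_att x; rewrite dotpC; apply: h.
by move=> h d dS; rewrite dotpC; apply: le_trans h; apply: cmp_ge.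
Qed.

Hypothesis hS : positive_spanning S.

Lemma cmp_gt0 v : v != 0 -> 0 < cmp_obj S v.
Proof.
move=> hv; rewrite ltNge; apply/negP => hle.
have [lam [hlam hv']] := hS v.
have : dotp v v <= 0.
  rewrite {1}hv' dotp_sum big_seq; apply: sumr_le0 => d dS.
  by rewrite mulr_ge0_le0 // ?hlam //; apply: le_trans hle; exact: cmp_ge.
move=> h; move/eqP: hv; apply; apply: dotp_eq0.
by apply/eqP; rewrite eq_le h dotp_ge0.
Qed.

End Aux.
Arguments dotpC {R n}.
Arguments dotpDl {R n}.
Arguments dotpZl {R n}.
Arguments dotpZr {R n}.
Arguments dotp0l {R n}.
Arguments dotp_sum {R n}.
Arguments dotp_ge0 {R n}.
Arguments dotp_eq0 {R n}.
Arguments enorm_sqr {R n}.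
Arguments enorm_ge0 {R n}.
Arguments enormZ {R n}.
Arguments enorm_gt0 {R n}.

Theorem theorem6 (R : realType) (n : nat) (S : seq 'rV[R]_n) (hn : (0 < n)%N)
  (hS : positive_spanning S) (hunit : forall d, d \in S -> enorm d = 1) :
  (forall v, cmp_opt S v ->
     0 < cmp_obj S v /\ qp_opt S ((cmp_obj S v)^-1 *: v)) /\
  (forall x, qp_opt S x ->
     0 < enorm x /\ cmp_opt S ((enorm x)^-1 *: x)).
Proof.
have hS0 : S != [::].
  apply/negP => /eqP S0; have [lam [_ h]] := hS (const_mx 1).
  move: h; rewrite S0 big_nil => /rowP /(_ (Ordinal hn)); rewrite !mxE => /eqP.
  by rewrite oner_eq0.
have ge := @cmp_ge R n S. have att := @cmp_att R n S hS0.
have Z := @cmpZ R n S hS0. have gt0 := @cmp_gt0 R n S hS.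
have iP := @inP_cmp R n S hS0.
have en0 : enorm (0 : 'rV[R]_n) = 0 by rewrite /enorm dotp0l sqrtr0.
split.
- move=> v [nv opt].
  have v0 : v != 0.
    by apply/eqP => v0; move: nv; rewrite v0 en0 => /eqP; rewrite eq_sym oner_eq0.
  set m := cmp_obj S v. have m0 : 0 < m := gt0 v v0. have m0' := ltW m0.
  have im0 : 0 < m^-1 by rewrite invr_gt0. have im0' := ltW im0.
  have imm : m^-1 * m = 1 by rewrite mulVf // gt_eqF.
  split => //; split.
    by apply/iP; rewrite Z // imm.
  move=> y /iP yP; rewrite enormZ nv mulr1 ger0_norm //.
  have e0 := enorm_ge0 y.
  have rm : enorm y * m <= 1.
    have [->|y0] := eqVneq y 0; first by rewrite en0 mul0r ler01.
    set r := enorm y. have r0 : 0 < r by apply: enorm_gt0. have r0' := ltW r0.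
    have ir0 : 0 < r^-1 by rewrite invr_gt0. have ir0' := ltW ir0.
    have irr : r^-1 * r = 1 by rewrite mulVf // gt_eqF.
    have h := opt (r^-1 *: y).
    rewrite enormZ ger0_norm // irr Z // in h.
    have h' := h erefl.
    have : r * m <= r * (r^-1 * cmp_obj S y) by rewrite ler_wpM2l //.
    rewrite mulrA mulfV ?gt_eqF // mul1r => h2.
    exact: le_trans h2 yP.
  have h1 : enorm y <= m^-1.
    have : enorm y * m * m^-1 <= m^-1 by rewrite ler_piMl //.
    by rewrite -mulrA (mulrC m) imm mulr1.
  by rewrite ler_pXn2r // // nnegrE.
- move=> x [xP opt].
  set u : 'rV[R]_n := const_mx 1.
  have u0 : u != 0.
    by apply/eqP => /rowP /(_ (Ordinal hn)); rewrite !mxE => /eqP; rewrite oner_eq0.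
  have fu := gt0 u u0. have fu' := ltW fu. have ifu : 0 <= (cmp_obj S u)^-1 by rewrite invr_ge0.
  have y0 : (cmp_obj S u)^-1 *: u != 0 by rewrite scaler_eq0 negb_or invr_eq0 gt_eqF.
  have yP : inP S ((cmp_obj S u)^-1 *: u).
    by apply/iP; rewrite Z // mulVf // gt_eqF.
  have h := opt _ yP.
  have ey := enorm_gt0 _ y0.
  have ex := enorm_ge0 x.
  have r0 : 0 < enorm x.
    rewrite lt_neqAle ex andbT; apply/negP => /eqP e.
    by move: h; rewrite -e expr0n /= leNgt exprn_gt0.
  set r := enorm x in r0 ex h *. have r0' := ltW r0.
  have ir0 : 0 < r^-1 by rewrite invr_gt0. have ir0' := ltW ir0.
  have irr : r^-1 * r = 1 by rewrite mulVf // gt_eqF.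
  split => //; split.
    by rewrite enormZ ger0_norm //.
  move=> w nw.
  have w0 : w != 0.
    by apply/eqP => w0; move: nw; rewrite w0 en0 => /eqP; rewrite eq_sym oner_eq0.
  have fw := gt0 w w0.
  set f := cmp_obj S w in fw *. have fw' := ltW fw.
  have if0 : 0 < f^-1 by rewrite invr_gt0. have if0' := ltW if0.
  have iff : f^-1 * f = 1 by rewrite mulVf // gt_eqF.
  have ywP : inP S (f^-1 *: w) by apply/iP; rewrite Z // iff.
  have h2 := opt _ ywP.
  rewrite enormZ nw mulr1 ger0_norm // in h2.
  have h3 : f^-1 <= r by rewrite -(ler_pXn2r (n:=2)) // nnegrE.
  have fx : cmp_obj S x <= 1 by apply/iP.
  rewrite Z //.
  have : r^-1 * cmp_obj S x <= r^-1 by rewrite ler_piMr //.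
  move/le_trans; apply.
  have : f^-1 * r^-1 <= r * r^-1 by rewrite ler_wpM2r //.
  rewrite (mulrC r) irr => h4.
  have : f * (f^-1 * r^-1) <= f * 1 by rewrite ler_wpM2l //.
  by rewrite mulrA (mulrC f) iff mul1r mulr1.
Qed.
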